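(* Let $h : \mathbb{R}^n \to \mathbb{R}$, let $l, u \in \mathbb{R}^n$ with $l \le u$, and let $S = \{x \in [l,u] : h(x) \le 0\}$. Let $\bar x \in [l,u]$ with $h(\bar x) > 0$, and let $h_{ave} : \mathbb{R}^n \to \mathbb{R}$ be a differentiable concave underestimator of $h$ at $\bar x$. Define \[ \hat h(x) = \min \{ h_{ave}(z) + \nabla h_{ave}(z)^{\mathsf T}(x - z) : z \in [l,u],\ h_{ave}(z) \ge 0 \}. \] Then the set $C = \{x \in \mathbb{R}^n : \hat h(x) \ge 0\}$ is a convex $S$-free set, and $C \supseteq \{x \in \mathbb{R}^n : h_{ave}(x) \ge 0\}$.
   Context: A function $h_{ave} : \mathbb{R}^n \to \mathbb{R}$ is a concave underestimator of $h$ at $\bar x$ if $h_{ave}$ is concave, $h_{ave}(x) \le h(x)$ for all $x \in \mathbb{R}^n$, and $h_{ave}(\bar x) = h(\bar x)$. Here $[l,u] = \{x \in \mathbb{R}^n : l_i \le x_i \le u_i \text{ for all } i\}$. A set $C$ is $S$-free if it is convex and contains no point of $S$ in its interior. *)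

(* Defs.v *)
From HB Require Import structures.
From mathcomp Require Import all_boot all_order all_algebra.
From mathcomp Require Import all_classical all_reals all_analysis.
Set Implicit Arguments. Unset Strict Implicit. Unset Printing Implicit Defensive.
Import Order.TTheory GRing.Theory Num.Theory.
Import numFieldNormedType.Exports.
Local Open Scope classical_set_scope.
Local Open Scope ring_scope.

Definition box (R : realType) (n : nat) (l u : 'rV[R]_n) : set 'rV[R]_n :=
  [set x | forall i : 'I_n, l ord0 i <= x ord0 i <= u ord0 i].

Definition convex_set (R : realType) (n : nat) (C : set 'rV[R]_n) : Prop :=
  forall x y t, C x -> C y -> 0 <= t <= 1 -> C (t *: x + (1 - t) *: y).

Definition concave_fun (R : realType) (n : nat) (f : 'rV[R]_n -> R) : Prop :=
  forall x y t, 0 <= t <= 1 -> t * f x + (1 - t) * f y <= f (t *: x + (1 - t) *: y).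

Definition concave_underestimator (R : realType) (n : nat)
    (g h : 'rV[R]_n -> R) (xbar : 'rV[R]_n) : Prop :=
  concave_fun g /\ (forall x, g x <= h x) /\ g xbar = h xbar.

Definition S_free (R : realType) (n : nat) (S C : set 'rV[R]_n) : Prop :=
  convex_set C /\ S `&` interior C = set0.

(* hhat x = min { g z + grad g(z)^T (x - z) : z in [l,u], g z >= 0 };
   grad g(z)^T v is the differential 'd g z v. *)
Definition hhat (R : realType) (n : nat) (g : 'rV[R]_n -> R) (l u : 'rV[R]_n)
    (x : 'rV[R]_n) : R :=
  inf [set y | exists z, box l u z /\ 0 <= g z /\ y = g z + 'd g z (x - z)].

(* Main.v *)
Require Import Defs.
From HB Require Import structures.
From mathcomp Require Import all_boot all_order all_algebra.
From mathcomp Require Import all_classical all_reals all_analysis.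
From mathcomp Require Import ring lra.
Import Order.TTheory GRing.Theory Num.Theory.
Import numFieldNormedType.Exports.
Local Open Scope classical_set_scope.
Local Open Scope ring_scope.

Lemma grad_ineq (R : realType) (n : nat) (g : 'rV[R]_n -> R) :
  concave_fun g -> (forall z, differentiable g z) ->
  forall y z, g y - g z <= 'd g z (y - z).
Proof.
move=> cg dg y z; set v := y - z.
rewrite -deriveE //.
have D : derivable g z v := diff_derivable (dg z).
set q := (fun h : R => h^-1 *: ((g \o shift z) (h *: v) - g z)).
have Hq : q @ 0^'+ --> 'D_v g z.
  have -> : 'D_v g z = lim (q @ 0^') by [].
  apply: cvg_trans D => A /=; rewrite !nbhs_filterE /= /at_right /dnbhs.
  rewrite /within /=; apply: filterS => x Hx x0; exact: Hx (lt0r_neq0 x0).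
apply: (cvgr_to_ge Hq).
near=> t.
have t0 : 0 < t by near: t; exact: nbhs_right_gt.
have t1 : t < 1 by near: t; exact: nbhs_right_lt.
rewrite /q /= /shift.
have := cg y z t; rewrite (ltW t0) (ltW t1) => /(_ isT).
have -> : t *: y + (1 - t) *: z = t *: v + z.
  by rewrite /v scalerBr scalerBl scale1r addrCA addrC.
move=> H.
rewrite ler_pdivlMl //.
rewrite (le_trans _ (lerB H (lexx (g z)))) //.
by rewrite le_eqVlt; apply/orP; left; apply/eqP; ring.
Unshelve. all: by end_near.
Qed.

Lemma line_cont (R : realType) (n : nat) (x d : 'rV[R]_n) :
  continuous (fun t : R => x + t *: d).
Proof.
move=> t; apply: cvgD; first exact: cvg_cst.
exact: cvgZr_tmp cvg_id.
Qed.

Theorem proposition1 (R : realType) (n : nat) (h have : 'rV[R]_n -> R)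
    (l u xbar : 'rV[R]_n) :
  (forall i : 'I_n, l ord0 i <= u ord0 i) ->
  box l u xbar -> 0 < h xbar ->
  (forall z, differentiable have z) ->
  concave_underestimator have h xbar ->
  let S := [set x | box l u x /\ h x <= 0] in
  let C := [set x | 0 <= hhat have l u x] in
  S_free S C /\ [set x | 0 <= have x] `<=` C.
Proof.
move=> lu bxb hxb dg [cg [gh geq]] S C.
set g := have in dg cg gh geq *.
have GI := @grad_ineq R n g cg dg.
pose Y x := [set y | exists z, box l u z /\ 0 <= g z /\ y = g z + 'd g z (x - z)].
have Yne x : Y x !=set0.
  exists (g xbar + 'd g xbar (x - xbar)); exists xbar; split => //; split => //.
  by rewrite geq ltW.
have Ylb x : lbound (Y x) (g x).
  move=> y [z [_ [_ ->]]]; have := GI x z; lra.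
have Cchar x : C x <-> forall z, box l u z -> 0 <= g z -> 0 <= g z + 'd g z (x - z).
  rewrite /C /hhat /=; split.
    move=> H z bz gz; apply: (le_trans H); apply: ge_inf; first by exists (g x); exact: Ylb.
    by exists z.
  move=> H; apply: lb_le_inf; first exact: Yne.
  by move=> y [z [bz [gz ->]]]; exact: H.
split; last first.
  move=> x /= gx; apply/Cchar => z bz gz; have := GI x z; lra.
split.
  move=> x y t /Cchar Cx /Cchar Cy /andP[t0 t1]; apply/Cchar => z bz gz.
  have -> : t *: x + (1 - t) *: y - z = t *: (x - z) + (1 - t) *: (y - z).
    by apply/rowP => i; rewrite !mxE; ring.
  rewrite linearD !linearZ /=.
  have E : forall a b : R, a *: b = a * b by []. rewrite !E. have := Cx z bz gz; have := Cy z bz gz; nra.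
apply/seteqP; split => x // [[bx hx0] ix].
have gx0 : g x <= 0 by apply: le_trans (gh x) hx0.
set d := xbar - x.
pose phi t := g (x + t *: d).
have phic : continuous phi.
  move=> t; apply: continuous_comp; first exact: line_cont.
  exact: differentiable_continuous.
have phi0 : phi 0 = g x by rewrite /phi scale0r addr0.
have phi1 : phi 1 = g xbar by rewrite /phi scale1r /d addrC subrK.
have [s s01 phis] : exists2 s, s \in `[0, 1] & phi s = 0.
  apply: IVT => //; first exact: continuous_subspaceT.
  rewrite phi0 phi1 geq; apply/andP; split.
    by rewrite ge_min gx0.
  by rewrite le_max (ltW hxb) orbT.
move: s01; rewrite in_itv /= => /andP[s0 s1].
have s1' : s < 1.
  rewrite lt_neqAle s1 andbT; apply/negP => /eqP es.
  by move: phis; rewrite es phi1 geq => /eqP; rewrite gt_eqF.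
set z := x + s *: d.
have bz : box l u z.
  move=> i; have := bx i; have := bxb i; rewrite /z /d !mxE => /andP[a1 a2] /andP[b1 b2].
  apply/andP; split; nra.
have gz : g z = 0 by [].
have dpos : 0 < 'd g z d.
  have := GI xbar z.
  have -> : xbar - z = (1 - s) *: d by apply/rowP => i; rewrite /z /d !mxE; ring.
  rewrite linearZ /= gz geq.
  have E : forall a b : R, a *: b = a * b by []. rewrite E => H.
  have H2 : 0 < (1 - s) * 'd g z d by lra.
  by rewrite pmulr_rgt0 in H2 => //; rewrite subr_gt0.
have Hn : \forall t \near 0^'+, 0 < t /\ C (x + t *: (- d)).
  near=> t; split; first by near: t; exact: nbhs_right_gt.
  near: t.
  have cl : (fun t : R => x + t *: (- d)) @ 0 --> x.
    have := @line_cont R n x (- d) 0; rewrite /continuous_at /= scale0r addr0; exact.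
  have := cl _ ix; rewrite /= nbhs_filterE /= => H0.
  rewrite /at_right /within /=; apply: filterS H0 => t Ht _; exact: Ht.
have [t [t0 Ct]] := filter_ex Hn.
move/Cchar: Ct => /(_ z bz); rewrite gz lexx => /(_ isT).
have -> : x + t *: - d - z = (- (s + t)) *: d.
  by apply/rowP => i; rewrite /z !mxE; ring.
rewrite linearZ /= add0r.
have E : forall a b : R, a *: b = a * b by []. rewrite E => H.
have : 0 < (s + t) * 'd g z d by apply: mulr_gt0 => //; lra.
lra.
Unshelve. all: by end_near.
Qed.
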